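(* Let $q\ge 4$ be a prime power and $\mathcal{K}$ a set of $q(q-2)$ points in $\mathrm{PG}(2,q)$. Then there exists a line $L$ with $|L\cap\mathcal{K}|\notin\{0,q-2,q-1\}$.
   Context: $\mathrm{PG}(2,q)$ is the projective plane of $\mathbb{F}_q^3$; points are $1$-dimensional and lines $2$-dimensional subspaces. *)

(* Defs.v *)
From HB Require Import structures.
From mathcomp Require Import all_boot all_order all_algebra all_field.
Set Implicit Arguments. Unset Strict Implicit. Unset Printing Implicit Defensive.
Import GRing.Theory.
Local Open Scope ring_scope.

(* PG(2,F) for a finite field F: points are 1-dimensional and lines are
   2-dimensional subspaces of F^3 = 'rV[F]_3. *)
Definition pg_point (F : fieldType) (U : {vspace 'rV[F]_3}) : bool := \dim U == 1%N.
Definition pg_line (F : fieldType) (L : {vspace 'rV[F]_3}) : bool := \dim L == 2%N.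

(* number of points of the (duplicate-free) list K lying on L, i.e. |L ∩ K| *)
Definition meet_count (F : fieldType) (L : {vspace 'rV[F]_3})
  (K : seq {vspace 'rV[F]_3}) : nat := count (fun P => (P <= L)%VS) K.

(* Main.v *)
Require Import Defs.
From HB Require Import structures.
From mathcomp Require Import all_boot all_order all_algebra all_field.
From mathcomp Require Import zify.
Import GRing.Theory.
Set Implicit Arguments. Unset Strict Implicit. Unset Printing Implicit Defensive.

Lemma arith_final (x c : nat) : 4 <= x -> x.-1 * c = 2 * x * (x - 2) -> False.
Proof.
move=> h e. have [y ey] : exists y, x = y.+1 by exists x.-1; lia.
subst x. have hy : 3 <= y by lia. simpl in e.
have e2 : y * c + 2 = 2 * y * y by nia.
have [h1|h1] := leqP c (2 * y - 1); nia.
Qed.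

Lemma count_sumb (T : Type) (a : pred T) s : count a s = \sum_(x <- s) (a x : nat).
Proof. by elim: s => [|x s IH]; rewrite ?big_nil ?big_cons //= IH. Qed.

Lemma card_sumb (T : finType) (A : pred T) : #|A| = \sum_(x : T) (A x : nat).
Proof.
rewrite -sum1_card big_mkcond /=; apply: eq_bigr => x _.
by rewrite unfold_in; case: (A x).
Qed.

Section PG.
Variable F : finFieldType.
Local Notation V := 'rV[F]_3.
Local Notation q := #|F|.

Lemma q_gt1 : 1 < q. Proof. exact: finNzRing_gt1. Qed.

Definition pts : seq {vspace V} :=
  undup (map (fun v => <[v]>%VS) [seq v <- enum V | v != 0%R]).

Lemma point_eq (P : {vspace V}) v : pg_point P -> v \in P -> v != 0%R -> <[v]>%VS = P.
Proof. by move=> /eqP P1 vP nz; apply/eqP; rewrite eqEdim -memvE vP dim_vline nz P1. Qed.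

Lemma pointP (v : V) : v != 0%R -> pg_point <[v]>%VS.
Proof. by rewrite /pg_point dim_vline => ->. Qed.

Lemma point_nz (P : {vspace V}) : pg_point P -> vpick P != 0%R /\ vpick P \in P.
Proof.
move=> /eqP P1; split; last exact: memv_pick.
rewrite vpick0; apply/eqP => P0; by rewrite P0 dimv0 in P1.
Qed.

Lemma mem_pts P : (P \in pts) = pg_point P.
Proof.
apply/idP/idP.
  rewrite mem_undup => /mapP [v]; rewrite mem_filter => /andP [nz _] ->.
  exact: pointP.
move=> P1; have [nz mP] := point_nz P1.
rewrite mem_undup; apply/mapP; exists (vpick P); first by rewrite mem_filter nz mem_enum.
by rewrite (point_eq P1 mP nz).
Qed.

Lemma uniq_pts : uniq pts. Proof. exact: undup_uniq. Qed.

Lemma card_nz (U : {vspace V}) : #|[pred v : V | (v \in U) && (v != 0%R)]| = (q ^ \dim U).-1.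
Proof.
rewrite -card_vspace [in RHS](cardD1 0%R) mem0v add1n /=.
by apply: eq_card => v; rewrite !inE andbC.
Qed.

Lemma line_eq (P : {vspace V}) v : pg_point P -> (<[v]>%VS == P) = (v \in P) && (v != 0%R).
Proof.
move=> P1; have [->|nz] := eqVneq v 0%R.
  rewrite andbF; apply/negbTE/eqP => e; move: P1; by rewrite /pg_point -e dim_vline eqxx.
rewrite andbT; apply/eqP/idP => [<-|vP]; first exact: memv_line.
exact: point_eq.
Qed.

Lemma count_pts_sub (U : {vspace V}) : q.-1 * count (fun P => (P <= U)%VS) pts = (q ^ \dim U).-1.
Proof.
rewrite -card_nz [RHS]card_sumb.
rewrite (eq_bigr (fun v => \sum_(P <- pts) ((v \in U) && (v != 0%R) && (<[v]>%VS == P) : nat))); last first.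
  move=> v _ /=; case C: ((v \in U) && (v != 0%R)) => /=; last by rewrite big1.
  rewrite -count_sumb (eq_count (a2 := pred1 <[v]>%VS)); last by move=> P; rewrite /= eq_sym.
  rewrite count_uniq_mem ?uniq_pts // mem_pts pointP //; by case/andP: C.
rewrite exchange_big /= count_sumb big_distrr /=.
rewrite [RHS](big_nth 0%VS) [LHS](big_nth 0%VS).
apply: eq_big_nat => i /andP [_ hi].
have P1 : pg_point (nth 0%VS pts i) by rewrite -mem_pts mem_nth.
set P := nth _ _ _.
rewrite (eq_bigr (fun v => ((P <= U)%VS : nat) * ((v \in P) && (v != 0%R) : nat))); last first.
  move=> v _; rewrite line_eq //.
  case PU: (P <= U)%VS; rewrite ?mul1n ?mul0n;
    case vU: (v \in U); case vP: (v \in P); case nz: (v != 0%R) => //=.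
    by rewrite (subvP PU) in vU.
  have e := point_eq P1 vP nz; by move: PU; rewrite -[P]e -memvE vU.
by rewrite -big_distrr /= -card_sumb card_nz (eqP P1) expn1 mulnC.
Qed.

Lemma arith_q2 x n : 1 < x -> x.-1 * n = (x ^ 2).-1 -> n = x.+1.
Proof.
move=> h e; have [y ey] : exists y, x = y.+2 by exists x.-2; lia.
subst x; move: e; rewrite /= !expnS expn0 muln1; nia.
Qed.

Lemma arith_q3 x n : 1 < x -> x.-1 * n = (x ^ 3).-1 -> n = (x * x + x).+1.
Proof.
move=> h e; have [y ey] : exists y, x = y.+2 by exists x.-2; lia.
subst x; move: e; rewrite /= !expnS expn0 muln1; nia.
Qed.

Lemma size_pts : size pts = (q * q + q).+1.
Proof.
apply: arith_q3; first exact: q_gt1.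
have d3 : \dim (fullv : {vspace V}) = 3 by rewrite dimvf dim_matrix.
have := count_pts_sub fullv; rewrite d3 => <-.
congr (_ * _); rewrite -size_filter; congr size.
apply/esym/all_filterP/allP => P _; exact: subvf.
Qed.

Lemma count_pts_line (M : {vspace V}) : pg_line M -> count (fun P => (P <= M)%VS) pts = q.+1.
Proof.
move=> /eqP M2; apply: arith_q2; first exact: q_gt1.
by rewrite count_pts_sub M2.
Qed.

Lemma dim_sum2 (P R : {vspace V}) : pg_point P -> pg_point R -> P != R -> \dim (P + R) = 2.
Proof.
move=> /eqP P1 /eqP R1 PR; have := dimv_sum_cap P R; rewrite P1 R1.
have d0 : \dim (P :&: R) = 0.
  move: (dimvS (capvSl P R)); rewrite P1 leq_eqVlt ltnS leqn0 => /orP [/eqP d1|/eqP //].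
  have eP : (P :&: R)%VS = P by apply/eqP; rewrite eqEdim capvSl P1 d1.
  have eR : (P :&: R)%VS = R by apply/eqP; rewrite eqEdim capvSr R1 d1.
  by rewrite -eP eR eqxx in PR.
by rewrite d0 addn0.
Qed.

Lemma line_sum (M P R : {vspace V}) : pg_line M -> pg_point P -> pg_point R -> P != R ->
  (P <= M)%VS -> (R <= M)%VS -> (P + R)%VS = M.
Proof.
move=> /eqP M2 P1 R1 PR PM RM; apply/eqP.
by rewrite eqEdim subv_add PM RM (dim_sum2 P1 R1 PR) M2.
Qed.

Lemma line_two (M : {vspace V}) : pg_line M -> exists P R,
  [/\ pg_point P, pg_point R, P != R, (P <= M)%VS & (R <= M)%VS].
Proof.
move=> /eqP M2.
have M0 : M != 0%VS by apply/eqP => M0; rewrite M0 dimv0 in M2.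
set u := vpick M.
have unz : u != 0%R by rewrite vpick0.
have uM : u \in M := memv_pick M.
case: (pickP (fun v => (v \in M) && (v \notin <[u]>%VS))) => [v /andP [vM vu] | H].
  have vnz : v != 0%R by apply: contraNneq vu => ->; exact: mem0v.
  exists <[u]>%VS, <[v]>%VS; split; rewrite ?pointP // -?memvE //.
  by apply: contraNneq vu => ->; exact: memv_line.
exfalso.
have : (M <= <[u]>)%VS.
  apply/subvP => v vM; move: (H v); rewrite vM /=; exact: negbFE.
move/dimvS; by rewrite M2 dim_vline unz.
Qed.

Definition lns : seq {vspace V} :=
  undup [seq M <- [seq (P + R)%VS | P <- pts, R <- pts] | \dim M == 2].

Lemma mem_lns M : (M \in lns) = pg_line M.
Proof.
apply/idP/idP.
  by rewrite mem_undup mem_filter => /andP [].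
move=> Ml; have [P [R [P1 R1 PR PM RM]]] := line_two Ml.
rewrite mem_undup mem_filter (eqP Ml) eqxx /= -(line_sum Ml P1 R1 PR PM RM).
by apply: allpairs_f; rewrite mem_pts.
Qed.

Lemma uniq_lns : uniq lns. Proof. exact: undup_uniq. Qed.

Lemma count_lns_2 (P R : {vspace V}) : pg_point P -> pg_point R -> P != R ->
  count (fun M => (P <= M)%VS && (R <= M)%VS) lns = 1.
Proof.
move=> P1 R1 PR.
transitivity (count_mem (P + R)%VS lns).
  apply: eq_in_count => M; rewrite mem_lns => Ml /=.
  apply/andP/eqP => [[PM RM]|->]; first by rewrite (line_sum Ml P1 R1 PR PM RM).
  by rewrite addvSl addvSr.
by rewrite count_uniq_mem ?uniq_lns // mem_lns /pg_line dim_sum2.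
Qed.

Lemma count_line_other (M P : {vspace V}) : pg_line M -> pg_point P -> (P <= M)%VS ->
  count (fun R => (R <= M)%VS && (R != P)) pts = q.
Proof.
move=> Ml P1 PM.
have := count_pts_line Ml.
rewrite (count_sumb (fun R => (R <= M)%VS)).
rewrite (eq_bigr (fun R => ((R <= M)%VS && (R != P) : nat) + (R == P : nat))); last first.
  by move=> R _; case: eqP => [->|]; rewrite ?PM ?eqxx ?andbF ?andbT //= addn0.
have c1 : count (fun R => R == P) pts = 1.
  have := count_uniq_mem P uniq_pts; rewrite mem_pts P1 => e; apply: (etrans _ e); exact: eq_count.
rewrite big_split /= -(count_sumb (fun R => R == P)) c1 -count_sumb addn1.
by case.
Qed.

Lemma count_lns_1 (P : {vspace V}) : pg_point P -> count (fun M => (P <= M)%VS) lns = q.+1.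
Proof.
move=> P1.
have qgt0 : 0 < q by have := q_gt1; lia.
apply/eqP; rewrite -(eqn_pmul2l qgt0); apply/eqP.
rewrite count_sumb big_distrr /=.
rewrite (eq_big_seq (fun M => \sum_(R <- pts) ((P <= M)%VS && (R <= M)%VS && (R != P) : nat))); last first.
  move=> M; rewrite mem_lns => Ml.
  case PM: (P <= M)%VS => /=; last by rewrite muln0 big1.
  by rewrite muln1 -count_sumb (count_line_other Ml P1 PM).
rewrite exchange_big /=.
rewrite (eq_big_seq (fun R => (R != P : nat))); last first.
  move=> R; rewrite mem_pts => R1.
  case RP: (R != P) => /=; last by rewrite big1 // => M _; rewrite andbF.
  rewrite (eq_bigr (fun M => ((P <= M)%VS && (R <= M)%VS : nat))); last by move=> M _; rewrite andbT.
  by rewrite -count_sumb count_lns_2 // eq_sym.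
rewrite -count_sumb.
have := count_predC (pred1 P) pts.
rewrite count_uniq_mem ?uniq_pts // mem_pts P1 size_pts.
rewrite (eq_count (a2 := predC (pred1 P))) //.
move=> /= e; rewrite mulnSr; lia.
Qed.

End PG.

Lemma sum_const_seq (T : Type) (s : seq T) c : \sum_(x <- s) c = size s * c.
Proof. by elim: s => [|x s IH]; rewrite ?big_nil ?big_cons //= IH mulSn. Qed.

Theorem mainTheorem15 (F : finFieldType) (K : seq {vspace 'rV[F]_3}) :
  4 <= #|F| ->
  uniq K ->
  all (@pg_point F) K ->
  size K = #|F| * (#|F| - 2) ->
  exists L : {vspace 'rV[F]_3},
    pg_line L /\ meet_count L K \notin [:: 0; #|F| - 2; #|F| - 1].
Proof.
move=> q4 uK allK sK.
case: (boolP (has (fun M => meet_count M K \notin [:: 0; #|F| - 2; #|F| - 1]) (lns F)))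
  => [/hasP [M Ml H] | /hasPn H].
  by exists M; split => //; rewrite -mem_lns.
exfalso.
set q := #|F| in q4 sK H.
set n := size K in sK.
have pK : forall P, P \in K -> pg_point P by move=> P; apply/allP.
have S1 : \sum_(M <- lns F) meet_count M K = n * q.+1.
  rewrite /meet_count (eq_bigr (fun M => \sum_(P <- K) ((P <= M)%VS : nat))); last first.
    by move=> M _; rewrite count_sumb.
  rewrite exchange_big /= (eq_big_seq (fun _ => q.+1)); last first.
    by move=> P PK; rewrite -count_sumb count_lns_1 // pK.
  by rewrite sum_const_seq.
have S2 : \sum_(M <- lns F) meet_count M K * meet_count M K = n * (n + q).
  rewrite (eq_bigr (fun M => \sum_(P <- K) \sum_(R <- K) ((P <= M)%VS && (R <= M)%VS : nat))); last first.
    move=> M _; rewrite /meet_count count_sumb big_distrl /=; apply: eq_bigr => P _.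
    by rewrite big_distrr /=; apply: eq_bigr => R _; rewrite mulnb.
  rewrite exchange_big /=.
  under eq_bigr do rewrite exchange_big /=.
  rewrite (eq_big_seq (fun _ => n + q)); first by rewrite sum_const_seq.
  move=> P PK.
  rewrite (eq_big_seq (fun R => 1 + q * (R == P : nat))); last first.
    move=> R RK; rewrite -count_sumb.
    have [->|RP] := eqVneq R P.
      rewrite /= muln1 add1n -(count_lns_1 (pK P PK)); apply: eq_count => M; exact: andbb.
    by rewrite muln0 addn0 count_lns_2 ?pK // eq_sym.
  rewrite big_split /= sum_const_seq muln1 -big_distrr /= -count_sumb.
  have := count_uniq_mem P uK; rewrite PK => e.
  rewrite (_ : count _ K = 1) ?muln1 //; apply: (etrans _ e); exact: eq_count.
have E : \sum_(M <- lns F) meet_count M K * meet_count M K =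
         \sum_(M <- lns F) ((q - 2) * meet_count M K + (q - 1) * (meet_count M K == q - 1 : nat)).
  apply: eq_big_seq => M Ml; have := H M Ml; rewrite negbK !inE => /or3P [] /eqP ->;
  case: eqP => ? /=; nia.
rewrite big_split /= -!big_distrr /= S1 S2 in E.
set c := \sum_(i <- _) _ in E.
apply: (@arith_final q c q4).
rewrite -subn1; subst n; rewrite sK in E.
have [y ey] : exists y, q = y.+4 by exists (q - 4); lia.
rewrite ey in E *; nia.
Qed.
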